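(* Let $N\ge 1$. For each $K\in\{0,1,\dots,N\}$ let $h_{n,K}=c_K\sum_{|\gamma|=K}h_\gamma$, where $c_K>0$ is chosen so that $\|h_{n,K}\|=1$. Then each $h_{n,K}$ is an eigenvector of $L(\mathcal{B}_N)$ with eigenvalue $2K$; the vectors $h_{n,K}$, $K=0,\dots,N$, are mutually orthogonal; and each $h_{n,K}$ is orthogonal to every Dirichlet eigenvector of $L(\mathcal{B}_N)$.
   Context: $L(\mathcal{B}_N)$ is the unnormalized Laplacian $(Lf)(v)=\sum_{w\sim v}[f(v)-f(w)]$ of the Boolean cube $\mathcal{B}_N$, whose vertex set is $\mathbb{Z}_2^N$ with $v\sim w$ iff $v-w=e_i$ for some standard basis vector $e_i$. For $\gamma\in\mathbb{Z}_2^N$, $|\gamma|$ denotes the number of coordinates of $\gamma$ equal to $1$, and $h_\gamma(v)=2^{-N/2}(-1)^{\langle v,\gamma\rangle}$ is the corresponding Hadamard vector (an eigenvector of $L(\mathcal{B}_N)$ with eigenvalue $2|\gamma|$); the $h_\gamma$ form an orthonormal basis of $\ell^2(\mathcal{B}_N)$. A Dirichlet eigenvector of $L(\mathcal{B}_N)$ is an eigenvector of $L(\mathcal{B}_N)$ vanishing at $\mathbf{0}=(0,\dots,0)$ and at $\mathbf{1}=(1,\dots,1)$. Inner products are the standard ones on $\mathbb{C}^{V}$. *)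

(* Defs.v *)
From HB Require Import structures.
From mathcomp Require Import all_boot all_order all_algebra all_field.
Set Implicit Arguments. Unset Strict Implicit. Unset Printing Implicit Defensive.
Import Order.TTheory GRing.Theory Num.Theory.
Local Open Scope ring_scope.

(* Vertices of the Boolean cube B_N: elements of Z_2^N, encoded as bool-valued
   finite functions on 'I_N (true = coordinate 1). Addition in Z_2 is xor. *)
Definition vertex (N : nat) := {ffun 'I_N -> bool}.

Definition vadd N (v w : vertex N) : vertex N := [ffun i => xorb (v i) (w i)].
Definition basis N (i : 'I_N) : vertex N := [ffun j => j == i].
Definition vzero N : vertex N := [ffun _ => false].
Definition vone N : vertex N := [ffun _ => true].

(* v ~ w iff v - w = e_i for some i (in Z_2, v - w = v + w) *)
Definition adj N (v w : vertex N) : bool := [exists i, vadd v w == basis i].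

Definition weight N (g : vertex N) : nat := #|[set i | g i]|.

(* <v, gamma> mod 2 is the parity of this count; (-1)^<v,gamma> *)
Definition ip_count N (v g : vertex N) : nat := #|[set i | v i && g i]|.

Definition cfun N := vertex N -> algC.

Definition laplacian N (f : cfun N) : cfun N :=
  fun v => \sum_(w | adj v w) (f v - f w).

Definition inner N (f g : cfun N) : algC := \sum_v f v * (g v)^*.
Definition vnorm N (f : cfun N) : algC := sqrtC (inner f f).

Definition hadamard N (g : vertex N) : cfun N :=
  fun v => (sqrtC (2 ^+ N))^-1 * (-1) ^+ ip_count v g.

Definition hsum N (c : algC) (K : nat) : cfun N :=
  fun v => c * \sum_(g : vertex N | weight g == K) hadamard g v.

Definition is_eigenvector N (f : cfun N) (lam : algC) : Prop :=
  (exists v, f v != 0) /\ forall v, laplacian f v = lam * f v.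

Definition dirichlet_eigenvector N (f : cfun N) : Prop :=
  (exists lam, is_eigenvector f lam) /\ f (vzero N) = 0 /\ f (vone N) = 0.

(* Main.v *)
Require Import Defs.
From HB Require Import structures.
From mathcomp Require Import all_boot all_order all_algebra all_field ring.
Import Order.TTheory GRing.Theory Num.Theory.
Local Open Scope ring_scope.
Set Implicit Arguments.

Lemma sgn_prod N (v g : vertex N) :
  (-1) ^+ ip_count v g = \prod_j (if v j && g j then -1 else 1) :> algC.
Proof.
rewrite /ip_count -prodr_const -big_mkcond /=.
by apply: eq_bigl => j; rewrite inE.
Qed.

Lemma ip_countC N (v g : vertex N) : ip_count v g = ip_count g v.
Proof. by apply: eq_card => j; rewrite !inE andbC. Qed.

Lemma sgn_flip N (v g : vertex N) i :
  (-1) ^+ ip_count v (vadd g (basis i)) =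
  (if v i then -1 else 1) * (-1) ^+ ip_count v g :> algC.
Proof.
rewrite !sgn_prod (bigD1 i) //= [in RHS](bigD1 i) //= mulrA; congr (_ * _).
  rewrite !ffunE eqxx.
  by case: (v i); case: (g i); rewrite /= ?mulr1 ?mulrN1 ?opprK.
apply: eq_bigr => j hj; by rewrite !ffunE (negbTE hj); case: (g j).
Qed.

Lemma had_flip N (g v : vertex N) i :
  hadamard g (vadd v (basis i)) = (if g i then -1 else 1) * hadamard g v.
Proof.
by rewrite /hadamard ip_countC sgn_flip [ip_count g v]ip_countC mulrCA.
Qed.

Lemma vadd_inv N (v w : vertex N) : vadd v (vadd v w) = w.
Proof. by apply/ffunP => j; rewrite !ffunE; case: (v j); case: (w j). Qed.

Lemma adj_sym N (v w : vertex N) : adj v w = adj w v.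
Proof.
rewrite /adj; suff -> : vadd v w = vadd w v by [].
by apply/ffunP => j; rewrite !ffunE; case: (v j); case: (w j).
Qed.

Lemma adj_sum N (v : vertex N) (F : vertex N -> algC) :
  \sum_(w | adj v w) F w = \sum_i F (vadd v (basis i)).
Proof.
rewrite -(big_imset _ (h := fun i => vadd v (basis i))) /=.
  apply: eq_bigl => w; rewrite /adj; apply/existsP/imsetP.
    by case=> i /eqP E; exists i => //; rewrite -E vadd_inv.
  by case=> i _ ->; exists i; rewrite vadd_inv.
move=> i j _ _ E.
have := congr1 (fun x => vadd v x) E; rewrite !vadd_inv => /ffunP /(_ i).
by rewrite !ffunE eqxx => /esym /eqP.
Qed.
Lemma had_eig N (g v : vertex N) :
  laplacian (hadamard g) v = (2 * weight g)%:R * hadamard g v.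
Proof.
rewrite /laplacian adj_sum.
transitivity (\sum_(i | g i) (2 * hadamard g v)).
  rewrite [RHS]big_mkcond /=; apply: eq_bigr => i _; rewrite had_flip.
  by case: (g i); rewrite ?mul1r ?subrr // mulN1r opprK mulr2n mulrDl mul1r.
rewrite sumr_const /weight natrM -mulr_natl.
have -> : #|[set i | g i]| = #|(fun i => g i)| by apply: eq_card => i; rewrite inE.
rewrite -mulr_natr; ring.
Qed.

Lemma lap_sa N (f g : cfun N) : inner (laplacian f) g = inner f (laplacian g).
Proof.
rewrite /inner /laplacian.
have E : \sum_v \sum_(w | adj v w) f w * (g v)^* =
         \sum_v \sum_(w | adj v w) f v * (g w)^*.
  rewrite (exchange_big_dep (fun _ => true)) //=.
  apply: eq_bigr => v _; apply: eq_bigl => w; exact: adj_sym.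
transitivity (\sum_v \sum_(w | adj v w) f v * (g v)^* -
              \sum_v \sum_(w | adj v w) f w * (g v)^*).
  rewrite -sumrB; apply: eq_bigr => v _; rewrite -sumrB mulr_suml.
  by apply: eq_bigr => w _; rewrite mulrBl.
rewrite E.
rewrite -sumrB; apply: eq_bigr => v _; rewrite -sumrB rmorph_sum mulr_sumr.
by apply: eq_bigr => w _; rewrite rmorphB mulrBr.
Qed.

Lemma char_sum N (v : vertex N) :
  \sum_(g : vertex N) (-1) ^+ ip_count v g =
  (if v == vzero N then (2 ^+ N) else 0) :> algC.
Proof.
case: eqP => [-> | /eqP hv].
  transitivity (\sum_(g : vertex N) (1 : algC)).
    apply: eq_bigr => g _; suff -> : ip_count (vzero N) g = 0%N by [].
    by apply/eqP; rewrite cards_eq0; apply/eqP/setP => j; rewrite !inE ffunE.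
  by rewrite sumr_const card_ffun card_bool card_ord natrX.
have [i hi] : exists i, v i.
  apply/existsP; apply: contraR hv; rewrite negb_exists => /forallP H.
  by apply/eqP/ffunP => j; rewrite ffunE; apply/negbTE.
set S := \sum_g _.
have HS : S = - S.
  rewrite {1}/S (reindex_inj (h := fun g => vadd g (basis i))) /=.
    by rewrite /S -sumrN; apply: eq_bigr => g _; rewrite sgn_flip hi mulN1r.
  move=> a b E; apply/ffunP => j; have := congr1 (fun x : vertex N => x j) E.
  by rewrite /= !ffunE; case: (a j); case: (b j); case: (j == i).
have : S *+ 2 == 0 by rewrite mulr2n {1}HS addNr.
by rewrite mulrn_eq0 /= => /eqP.
Qed.

Lemma hsum_eig N c K (v : vertex N) :
  laplacian (hsum c K) v = (2 * K)%:R * hsum c K v.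
Proof.
rewrite /laplacian /hsum.
under eq_bigr do rewrite -mulrBr -sumrB.
rewrite -mulr_sumr exchange_big /= mulrCA; congr (_ * _).
rewrite mulr_sumr; apply: eq_bigr => g /eqP <-.
by rewrite -had_eig.
Qed.

Lemma inner_ext N (f f' g : cfun N) : (forall v, f v = f' v) -> inner f g = inner f' g.
Proof. by move=> H; apply: eq_bigr => v _; rewrite H. Qed.

Lemma inner_ext2 N (f g g' : cfun N) : (forall v, g v = g' v) -> inner f g = inner f g'.
Proof. by move=> H; apply: eq_bigr => v _; rewrite H. Qed.

Lemma innerZl N a (f g : cfun N) : inner (fun v => a * f v) g = a * inner f g.
Proof. by rewrite /inner mulr_sumr; apply: eq_bigr => v _; rewrite mulrA. Qed.

Lemma innerZr N a (f g : cfun N) : inner f (fun v => a * g v) = a^* * inner f g.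
Proof. by rewrite /inner mulr_sumr; apply: eq_bigr => v _; rewrite rmorphM mulrCA. Qed.

Lemma eig_orth N (f g : cfun N) a b :
  (forall v, laplacian f v = a * f v) -> (forall v, laplacian g v = b * g v) ->
  a != b^* -> inner f g = 0.
Proof.
move=> Hf Hg hab.
have E : a * inner f g = b^* * inner f g.
  by rewrite -innerZl -(@inner_ext _ _ _ g Hf) lap_sa (@inner_ext2 _ f _ _ Hg) innerZr.
apply/eqP; move: E => /eqP; rewrite -subr_eq0 -mulrBl mulf_eq0 subr_eq0.
by rewrite (negbTE hab).
Qed.

Theorem lemma3 (N : nat) (hN : (1 <= N)%N) (c : nat -> algC)
  (hc_pos : forall K, (K <= N)%N -> 0 < c K)
  (hc_norm : forall K, (K <= N)%N -> vnorm (@hsum N (c K) K) = 1) :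
  (forall K, (K <= N)%N -> is_eigenvector (@hsum N (c K) K) (2 * K)%:R) /\
  (forall K K', (K <= N)%N -> (K' <= N)%N -> K <> K' ->
     inner (@hsum N (c K) K) (@hsum N (c K') K') = 0) /\
  (forall K (f : cfun N), (K <= N)%N -> dirichlet_eigenvector f ->
     inner (@hsum N (c K) K) f = 0).
Proof.
split.
  move=> K hK; split; last exact: hsum_eig.
  apply/existsP; apply: contraT; rewrite negb_exists => /forallP H.
  have := hc_norm K hK; rewrite /vnorm.
  have -> : inner (@hsum N (c K) K) (@hsum N (c K) K) = 0.
    by rewrite /inner; apply: big1 => v _; move: (H v); rewrite negbK => /eqP ->; rewrite mul0r.
  by rewrite sqrtC0 => /esym/eqP; rewrite oner_eq0.
split.
  move=> K K' _ _ hKK'.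
  apply: (eig_orth _ _ (@hsum_eig N (c K) K) (@hsum_eig N (c K') K')).
  rewrite conjC_nat eqr_nat eqn_mul2l /=; exact/eqP.
move=> K f hK [[lam [_ Hf]] [f0 _]].
transitivity (c K * \sum_(g | weight g == K) inner (hadamard g) f).
  rewrite /inner /hsum.
  under eq_bigr do rewrite -mulrA mulr_suml.
  by rewrite -mulr_sumr exchange_big.
case: (eqVneq lam^* ((2 * K)%:R)) => hl; last first.
  rewrite big1 ?mulr0 // => g /eqP hg.
  by apply: (eig_orth _ _ (had_eig g) Hf); rewrite hg eq_sym.
rewrite big_mkcond /=.
have -> : \sum_(g : vertex N) (if weight g == K then inner (hadamard g) f else 0)
   = \sum_(g : vertex N) inner (hadamard g) f.
  apply: eq_bigr => g _; case: eqP => // hg; symmetry.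
  apply: (eig_orth _ _ (had_eig g) Hf); rewrite hl eqr_nat eqn_mul2l /=; exact/eqP.
rewrite /inner /hadamard exchange_big /=.
under eq_bigr do rewrite -mulr_suml -mulr_sumr char_sum.
rewrite (bigD1 (vzero N)) //= f0 conjC0 mulr0 add0r big1 ?mulr0 // => v /negbTE ->.
by rewrite mulr0 mul0r.
Qed.
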